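(* Suppose $p=2$, and let $E\subseteq\mathcal F(\Lambda,\bar K)$ be a nonzero translation-invariant subspace of finite dimension. Then there exists a nonzero function $h\in E^0$ whose period lattice $\Lambda(h)$ is characteristic, i.e. of odd index in $\Lambda$.
   Context: $K=\mathrm{GF}(2^r)$, $\bar K$ an algebraic closure; $\Lambda$ is a lattice (free abelian group of finite rank); $\mathcal F(\Lambda,\bar K)$ is the space of all functions $\Lambda\to\bar K$; translation-invariant means stable under all $f\mapsto f(\cdot+v)$, $v\in\Lambda$. $E^0$ is the span of all characters (homomorphisms $\Lambda\to\bar K^\times$) lying in $E$. $\Lambda(h)=\{v\in\Lambda:h(\cdot+v)=h\}$. A sublattice is characteristic if it is an intersection of finitely many kernels of characters $\Lambda\to\bar K^\times$. *)

(* Defs.v *)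
From mathcomp Require Import all_boot all_order all_algebra.
Set Implicit Arguments.
Unset Strict Implicit.
Unset Printing Implicit Defensive.
Import GRing.Theory.
Local Open Scope ring_scope.

(* The lattice Lambda is modelled as Z^n = 'rV[int]_n.  Functions
   Lambda -> F are plain Rocq functions; subspaces are Prop-valued
   predicates on them. *)
Section Defs.
Variables (n : nat) (F : fieldType).
Notation Lam := 'rV[int]_n.
Notation Fun := (Lam -> F).

(* F is an algebraic closure of GF(2^r): algebraically closed, of
   characteristic 2, and algebraic over its prime field, i.e. every element
   is a root of a monic integer polynomial mapped into F. *)
Definition alg_closure_char2 (F' : closedFieldType) : Prop :=
  (2%N \in [pchar F']) /\ forall x : F', integralOver (fun z : int => z%:~R) x.

Definition fzero : Fun := fun _ => 0.

Definition translate (f : Fun) (v : Lam) : Fun := fun x => f (x + v).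

Definition lincomb (s : seq Fun) (c : 'I_(size s) -> F) : Fun :=
  fun x => \sum_(i < size s) c i * (nth fzero s i) x.

Definition is_subspace (E : Fun -> Prop) : Prop :=
  E fzero /\
  (forall f g, E f -> E g -> E (fun x => f x + g x)) /\
  (forall (a : F) f, E f -> E (fun x => a * f x)).

Definition finite_dim (E : Fun -> Prop) : Prop :=
  exists s : seq Fun, forall f, E f <-> exists c, f = lincomb (s:=s) c.

Definition translation_invariant (E : Fun -> Prop) : Prop :=
  forall f v, E f -> E (translate f v).

Definition is_character (chi : Fun) : Prop :=
  (forall x, chi x != 0) /\ (forall x y, chi (x + y) = chi x * chi y).

Definition E0 (E : Fun -> Prop) (h : Fun) : Prop :=
  exists (s : seq Fun) (c : 'I_(size s) -> F),
    (forall i : 'I_(size s), is_character (nth fzero s i) /\ E (nth fzero s i)) /\ h = lincomb (s:=s) c.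

Definition period_lattice (h : Fun) (v : Lam) : Prop := translate h v = h.

Definition characteristic (L : Lam -> Prop) : Prop :=
  exists s : seq Fun, (forall i : 'I_(size s), is_character (nth fzero s i)) /\
    forall v, L v <-> (forall i : 'I_(size s), nth fzero s i v = 1).
End Defs.

(* Main.v *)
Require Import Defs.
From mathcomp Require Import all_boot all_order all_algebra.
From mathcomp Require Import ring.
From Stdlib Require Import FunctionalExtensionality Classical.
Set Implicit Arguments. Unset Strict Implicit. Unset Printing Implicit Defensive.
Import GRing.Theory.
Local Open Scope ring_scope.

Definition Pop (F : fieldType) (n : nat) (v : 'rV[int]_n) (U : {poly F})
  (g : 'rV[int]_n -> F) (x : 'rV[int]_n) : F :=
  \sum_(i < size U) U`_i * g (x + v *+ i).

Lemma Pop_widen (F : fieldType) n (v : 'rV[int]_n) (U : {poly F}) g x N :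
  (size U <= N)%N -> Pop v U g x = \sum_(i < N) U`_i * g (x + v *+ i).
Proof.
move=> HN; rewrite /Pop (big_ord_widen N (fun i => U`_i * g (x + v *+ i)) HN).
rewrite big_mkcond; apply: eq_bigr => i _; case: ifP => // /negbT.
by rewrite -leqNgt => h; rewrite nth_default // mul0r.
Qed.

Lemma Pop_factor (F : fieldType) n (v : 'rV[int]_n) (q : {poly F}) r g x :
  Pop v (q * ('X - r%:P))%R g x = Pop v q (fun y => g (y + v) - r * g y) x.
Proof.
have Hs : (size (q * ('X - r%:P))%R <= (size q).+1)%N.
  by apply: leq_trans (size_polyMleq _ _) _; rewrite size_XsubC addn2.
rewrite (@Pop_widen _ _ v _ g x _ Hs) (@Pop_widen _ _ v _ _ x _ (leqnn _)).
rewrite mulrBr.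
under eq_bigr do rewrite coefB coefMX coefMC mulrBl.
rewrite sumrB big_ord_recl /= mul0r add0r big_ord_recr /=.
have -> : q`_(size q) = 0 by rewrite nth_default.
rewrite !mul0r addr0.
under [X in _ = X]eq_bigr do rewrite mulrBr.
rewrite sumrB; congr (_ - _).
  apply: eq_bigr => i _; rewrite /bump /= add1n /= mulrS.
  by rewrite add0n [v + _]addrC addrA.
by apply: eq_bigr => i _; rewrite mulrA.
Qed.

Lemma eig_rec (F : closedFieldType) n (v : 'rV[int]_n) (W : ('rV[int]_n -> F) -> Prop)
 (Wadd : forall f g, W f -> W g -> W (fun x => f x + g x))
 (Wscale : forall a f, W f -> W (fun x => a * f x))
 (Wtr : forall f, W f -> W (fun x => f (x + v))) :
 forall p : {poly F}, p != 0 -> forall f, W f -> f <> (fun _ => 0) ->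
 (forall x, Pop v p f x = 0) ->
 exists g mu, W g /\ g <> (fun _ => 0) /\ forall x, g (x + v) = mu * g x.
Proof.
move=> p; have [N] := ubnP (size p); elim: N p => // N IH p Hsz p0 f Wf f0 Pf.
have [/eqP/size_poly1P [c c0 pc]|] := eqVneq (size p) 1%N.
  exfalso; apply: f0; apply: functional_extensionality => x.
  move: (Pf x); rewrite /Pop pc size_polyC c0 big_ord1 coefC /= mulr0n addr0.
  by move/eqP; rewrite mulf_eq0 (negbTE c0) => /eqP.
move/closed_rootP => [r /factor_theorem [q pq]].
have q0 : q != 0 by apply: contraNneq p0 => q0; rewrite pq q0 mul0r.
have Hsq : (size q < N)%N.
  move: Hsz; rewrite pq size_mul // ?size_XsubC; last by rewrite -size_poly_eq0 size_XsubC.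
  by rewrite addn2.
set g := fun y => f (y + v) + (- r) * f y.
have Wg : W g by apply: Wadd; [apply: Wtr | apply: Wscale].
case: (classic (g = fun _ => 0)) => g0.
  exists f, r; split=> //; split=> // x.
  have := congr1 (fun h => h x) g0; rewrite /g /= mulNr => /eqP.
  by rewrite subr_eq0 => /eqP.
apply: (IH q Hsq q0 g Wg g0) => x.
rewrite -(Pf x) pq Pop_factor; apply: eq_bigr => i _.
by rewrite /g mulNr.
Qed.

Lemma eig1 (F : closedFieldType) n (v : 'rV[int]_n) (W : ('rV[int]_n -> F) -> Prop)
 (Wadd : forall f g, W f -> W g -> W (fun x => f x + g x))
 (Wscale : forall a f, W f -> W (fun x => a * f x))
 (Wtr : forall f, W f -> W (fun x => f (x + v))) k (S : 'I_k -> 'rV[int]_n -> F)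
 (Wspan : forall f, W f -> exists c : 'I_k -> F, forall x, f x = \sum_i c i * S i x) :
 forall f, W f -> f <> (fun _ => 0) ->
 exists g mu, W g /\ g <> (fun _ => 0) /\ forall x, g (x + v) = mu * g x.
Proof.
move=> f Wf f0.
have WT : forall j : nat, W (fun x => f (x + v *+ j)).
  elim=> [|j IH].
    by have -> : (fun x => f (x + v *+ 0)) = f by apply: functional_extensionality => x; rewrite mulr0n addr0.
  have -> : (fun x => f (x + v *+ j.+1)) = (fun x => f (x + v + v *+ j)).
    by apply: functional_extensionality => x; rewrite mulrS addrA.
  exact (Wtr _ IH).
have [C HC] := fin_all_exists (fun j : 'I_k.+1 => Wspan _ (WT j)).
set M := \matrix_(j < k.+1, i < k) C j i.
have : kermx M != 0.
  rewrite kermx_eq0 /row_free; apply/negP => /eqP h.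
  by have := rank_leq_col M; rewrite h ltnn.
move/rowV0Pn => [a /sub_kermxP aM a0].
set p := \poly_(j < k.+1) a 0 (inord j).
have p0 : p != 0.
  apply: contraNneq a0 => hp; apply/eqP/rowP => j.
  have := congr1 (fun q : {poly F} => q`_j) hp.
  by rewrite coef_poly ltn_ord inord_val coef0 mxE => ->.
apply: (eig_rec Wadd Wscale Wtr p0 Wf f0) => x.
rewrite (@Pop_widen _ _ v _ f x k.+1) ?size_poly //.
under eq_bigr => j _ do rewrite coef_poly ltn_ord inord_val (HC j x) mulr_sumr.
rewrite exchange_big /= big1 // => i _.
have := congr1 (fun m : 'rV[F]_k => m 0 i) aM; rewrite !mxE => h.
transitivity ((\sum_j a 0 j * M j i) * S i x); last by rewrite h mul0r.
rewrite mulr_suml; apply: eq_bigr => j _.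
by rewrite mxE mulrA.
Qed.

Lemma common_eig (F : closedFieldType) (n : nat)
  (E : ('rV[int]_n -> F) -> Prop) :
  is_subspace E -> finite_dim E -> translation_invariant E ->
  (exists f, E f /\ f <> (fun _ => 0)) ->
  exists (lam : 'I_n -> F) f, E f /\ f <> (fun _ => 0) /\
    forall j : 'I_n, forall x, f (x + 'e_j) = lam j * f x.
Proof.
move=> [E0 [Eadd Escale]] [s Hs] Etr [f0 [Ef0 nf0]].
have Espan : forall f, E f -> exists c : 'I_(size s) -> F,
    forall x, f x = \sum_i c i * nth (@fzero n F) s i x.
  by move=> f /Hs [c ->]; exists c.
suff : forall m, (m <= n)%N -> exists (lam : 'I_n -> F) f, E f /\ f <> (fun _ => 0) /\
    forall j : 'I_n, (j < m)%N -> forall x, f (x + 'e_j) = lam j * f x.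
  by move=> /(_ n (leqnn n)) [lam [f [Ef [nf Hf]]]]; exists lam, f; do 2 split=> //; move=> j; apply: Hf.
elim=> [_|m IH Hm].
  by exists (fun _ => 0), f0; do 2 split=> //.
have [lam [f [Ef [nf Hf]]]] := IH (ltnW Hm).
pose W := fun g => E g /\ forall j : 'I_n, (j < m)%N -> forall x, g (x + 'e_j) = lam j * g x.
have Wadd : forall f g, W f -> W g -> W (fun x => f x + g x).
  move=> g1 g2 [E1 H1] [E2 H2]; split; first exact: Eadd.
  by move=> j hj x; rewrite H1 // H2 // mulrDr.
have Wscale : forall a f, W f -> W (fun x => a * f x).
  move=> a g [E1 H1]; split; first exact: Escale.
  by move=> j hj x; rewrite H1 // mulrCA.
pose em := 'e_(Ordinal Hm) : 'rV[int]_n.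
have Wtr : forall f, W f -> W (fun x => f (x + em)).
  move=> g [E1 H1]; split; first exact: (Etr g em E1).
  by move=> j hj x; rewrite addrAC H1.
have [g [mu [[Eg Hg] [ng Hmu]]]] := eig1 Wadd Wscale Wtr (fun f (hf : W f) => Espan f hf.1) (conj Ef Hf) nf.
exists (fun j => if j == Ordinal Hm then mu else lam j), g; do 2 split=> //.
move=> j hj x; case: eqP => [->|ne]; first exact: Hmu.
apply: Hg; rewrite ltn_neqAle -ltnS hj andbT.
by apply/eqP => e; apply: ne; apply: val_inj.
Qed.

Theorem lemma5p13 (F : closedFieldType) (n : nat)
  (E : ('rV[int]_n -> F) -> Prop) :
  alg_closure_char2 F ->
  is_subspace E -> finite_dim E -> translation_invariant E ->
  (exists f, E f /\ f <> (fun _ => 0)) ->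
  exists h, E0 E h /\ h <> (fun _ => 0) /\ characteristic F (period_lattice h).
Proof.
move=> _ Esub Efin Etr Ene.
have [lam [f [Ef [nf Hf]]]] := common_eig Esub Efin Etr Ene.
pose G := fun v => exists c : F, c != 0 /\ forall x, f (x + v) = c * f x.
have G0 : G 0 by exists 1; split; [exact: oner_neq0 | move=> x; rewrite addr0 mul1r].
have GD : forall v w, G v -> G w -> G (v + w).
  move=> v w [c [c0 Hc]] [d [d0 Hd]]; exists (d * c); split; first exact: mulf_neq0.
  by move=> x; rewrite addrA Hd Hc mulrA.
have GN : forall v, G v -> G (- v).
  move=> v [c [c0 Hc]]; exists c^-1; split; first by rewrite invr_eq0.
  move=> x; have := Hc (x - v); rewrite subrK => ->.
  by rewrite mulrA mulVf // mul1r.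
have GM : forall v m, G v -> G (v *+ m).
  move=> v; elim=> [|m IH] Gv; first by rewrite mulr0n.
  by rewrite mulrS; apply: GD Gv (IH Gv).
have GZ : forall v (z : int), G v -> G (v *~ z).
  move=> v [m|m] Gv; first exact (GM v m Gv).
  by rewrite NegzE mulrNz; apply: GN; exact (GM v m.+1 Gv).
have Ge : forall j, G 'e_j.
  move=> j; exists (lam j); split; last exact: Hf.
  apply/eqP => l0; apply: nf; apply: functional_extensionality => y.
  by rewrite -(subrK 'e_j y) Hf l0 mul0r.
have GA : forall v, G v.
  move=> v; rewrite (row_sum_delta v); apply: (big_ind G G0 GD) => j _.
  have -> : v 0 j *: 'e_j = ('e_j : 'rV[int]_n) *~ v 0 j by rewrite -scaler_int intz.
  exact: GZ.
have f00 : f 0 != 0.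
  apply/eqP => z; apply: nf; apply: functional_extensionality => x.
  have [c [_ Hc]] := GA x; by rewrite -(add0r x) Hc z mulr0.
have fx0 : forall x, f x != 0.
  move=> x; have [c [c0 Hc]] := GA x; by rewrite -(add0r x) Hc mulf_neq0.
pose chi := fun x => (f 0)^-1 * f x.
have chi0 : chi 0 = 1 by rewrite /chi mulVf.
have chiM : forall x y, chi (x + y) = chi x * chi y.
  move=> x y; have [c [_ Hc]] := GA y.
  have Hy := Hc 0; rewrite add0r in Hy.
  rewrite /chi Hc Hy; field; exact: f00.
have chiC : is_character chi.
  split=> // x; rewrite /chi mulf_neq0 ?invr_eq0 //.
have nth1 : forall i : 'I_(size [:: chi]), nth (@fzero n F) [:: chi] i = chi.
  by case=> [[|//] ?].
exists chi; split; last split.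
- exists [:: chi], (fun _ => 1); split.
    by move=> i; rewrite nth1; split=> //; apply: Esub.2.2.
  apply: functional_extensionality => x; rewrite /lincomb /= big_ord1 mul1r.
  by rewrite nth1.
- move=> h; have := congr1 (fun g => g 0) h; rewrite /= chi0 => /eqP.
  by rewrite oner_eq0.
- exists [:: chi]; split; first by move=> i; rewrite nth1.
  move=> v; split.
    move=> hv i; rewrite nth1; have := congr1 (fun g => g 0) hv.
    by rewrite /translate /= add0r chi0.
  move=> hv; apply: functional_extensionality => x.
  have := hv ord0; rewrite nth1 => h1; by rewrite /translate chiM h1 mulr1.
Qed.
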